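(* Let $\hat q$ be an $n\times n$ and $\hat p$ an $m\times m$ parametric matrix and let $M$ be an $n\times m$ $(\hat q,\hat p)$-Manin matrix over $\mathfrak R$. Then for every $k\ge1$ the following identities hold in $\mathrm{Hom}((\mathbb C^m)^{\otimes k},(\mathbb C^n)^{\otimes k})\otimes\mathfrak R$: $$A_{\hat q}^{(k)}M_1\cdots M_k=A_{\hat q}^{(k)}M_1\cdots M_kA_{\hat p}^{(k)},\qquad M_1\cdots M_kS_{\hat p}^{(k)}=S_{\hat q}^{(k)}M_1\cdots M_kS_{\hat p}^{(k)}.$$
   Context: $\mathfrak R$ is an associative unital algebra over $\mathbb C$. A parametric $n\times n$ matrix is a matrix $\hat q=(q_{ij})$ of nonzero complex numbers with $q_{ij}q_{ji}=1$, $q_{ii}=1$. An $n\times m$ matrix $M$ over $\mathfrak R$ is a $(\hat q,\hat p)$-Manin matrix if $M_{ik}M_{jk}=q_{ji}M_{jk}M_{ik}$ for $1\le i<j\le n$, $1\le k\le m$, and $M_{ik}M_{jl}-q_{ji}p_{kl}M_{jl}M_{ik}+p_{kl}M_{il}M_{jk}-q_{ji}M_{jk}M_{il}=0$ for $i<j$, $k<l$. Let $E_{ij}$ be matrix units and $P_{\hat q}=\sum_{i,j=1}^nq_{ji}E_{ij}\otimes E_{ji}\in\mathrm{End}(\mathbb C^n\otimes\mathbb C^n)$ (so $P_{\hat q}^2=1$). The assignment $s_i=(i,i+1)\mapsto P_{\hat q}^{(i,i+1)}$ ($P_{\hat q}$ acting on tensor factors $i,i+1$ of $(\mathbb C^n)^{\otimes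 k}$) defines an action of $S_k$; write $P_{\hat q}^{\sigma}$ for the image of $\sigma\in S_k$. Set $S_{\hat q}^{(k)}=\frac1{k!}\sum_{\sigma\in S_k}P_{\hat q}^{\sigma}$ and $A_{\hat q}^{(k)}=\frac1{k!}\sum_{\sigma\in S_k}\mathrm{sgn}(\sigma)P_{\hat q}^{\sigma}$; similarly for $\hat p$ on $(\mathbb C^m)^{\otimes k}$. $M_a$ denotes $M$ acting on the $a$-th tensor factor, i.e. $1^{\otimes(a-1)}\otimes M\otimes1^{\otimes(k-a)}\in\mathrm{Hom}((\mathbb C^m)^{\otimes k},(\mathbb C^n)^{\otimes k})\otimes\mathfrak R$. *)

(* Defs.v *)
From mathcomp Require Import all_boot all_algebra all_fingroup complex.
From mathcomp Require Import Rstruct.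
Set Implicit Arguments.
Unset Strict Implicit.
Unset Printing Implicit Defensive.
Import GRing.Theory.
Local Open Scope ring_scope.

Definition CC : numClosedFieldType := (Rdefinitions.R)[i].

Definition parametric (n : nat) (q : 'M[CC]_n) : Prop :=
  (forall i j, q i j != 0) /\ (forall i j, q i j * q j i = 1) /\ (forall i, q i i = 1).

Definition manin (Ralg : algType CC) (n m : nat) (q : 'M[CC]_n) (p : 'M[CC]_m)
  (M : 'I_n -> 'I_m -> Ralg) : Prop :=
  (forall (i j : 'I_n) (k : 'I_m), (i < j)%N ->
      M i k * M j k = q j i *: (M j k * M i k)) /\
  (forall (i j : 'I_n) (k l : 'I_m), (i < j)%N -> (k < l)%N ->
      M i k * M j l - (q j i * p k l) *: (M j l * M i k)
      + p k l *: (M i l * M j k) - q j i *: (M j k * M i l) = 0).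

(* Multi-indices of the basis of (C^n)^{(x)k}: functions 'I_k -> 'I_n. *)
Definition tidx (n k : nat) := {ffun 'I_k -> 'I_n}.

(* Elements of Hom((C^m)^{(x)k},(C^n)^{(x)k}) (x) A, as arrays of entries in A
   (row multi-index in (C^n)^{(x)k}, column multi-index in (C^m)^{(x)k}). *)
Definition tmat (A : Type) (T1 T2 : Type) := T1 -> T2 -> A.

Definition tmul (A : pzSemiRingType) (T1 T2 T3 : finType)
  (X : tmat A T1 T2) (Y : tmat A T2 T3) : tmat A T1 T3 :=
  fun i l => \sum_(j : T2) X i j * Y j l.

Definition tid (A : pzSemiRingType) (T : finType) : tmat A T T :=
  fun i j => (i == j)%:R.

(* embedding of a C-valued operator into Hom (x) A, X |-> X (x) 1 *)
Definition tlift (Ralg : algType CC) (T1 T2 : Type) (X : tmat CC T1 T2)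
  : tmat Ralg T1 T2 := fun i j => (X i j)%:A.

Definition Eunit (n : nat) (i j x c : 'I_n) : CC := ((x == i) && (c == j))%:R.

(* P_q = sum_{i,j} q_{ji} E_ij (x) E_ji, entry ((x,y),(c,d)) *)
Definition Pq (n : nat) (q : 'M[CC]_n) (x y c d : 'I_n) : CC :=
  \sum_(i < n) \sum_(j < n) q j i * (Eunit i j x c * Eunit j i y d).

Definition Pq_at (n k : nat) (q : 'M[CC]_n) (a b : 'I_k) : tmat CC (tidx n k) (tidx n k) :=
  fun I J => Pq q (I a) (I b) (J a) (J b) *
             \prod_(c : 'I_k | (c != a) && (c != b)) ((I c == J c)%:R : CC).

Definition is_Pq_action (n k : nat) (q : 'M[CC]_n)
  (rho : {perm 'I_k} -> tmat CC (tidx n k) (tidx n k)) : Prop :=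
  (forall I J, rho 1%g I J = ((I == J)%:R : CC)) /\
  (forall s t I J, rho (s * t)%g I J = tmul (rho s) (rho t) I J) /\
  (forall (a b : 'I_k), val b = (val a).+1 -> forall I J, rho (tperm a b) I J = Pq_at q a b I J).

Definition Symm (n k : nat) (rho : {perm 'I_k} -> tmat CC (tidx n k) (tidx n k))
  : tmat CC (tidx n k) (tidx n k) :=
  fun I J => (k`!%:R)^-1 * \sum_(s : {perm 'I_k}) rho s I J.

Definition Antisymm (n k : nat) (rho : {perm 'I_k} -> tmat CC (tidx n k) (tidx n k))
  : tmat CC (tidx n k) (tidx n k) :=
  fun I J => (k`!%:R)^-1 * \sum_(s : {perm 'I_k}) (-1) ^+ (odd_perm s) * rho s I J.

(* M_1 M_2 ... M_k : its (I,J) entry is M_{I1 J1} M_{I2 J2} ... M_{Ik Jk}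
   (product in A taken in the order 1,...,k). *)
Definition Mprod (Ralg : algType CC) (n m k : nat) (M : 'I_n -> 'I_m -> Ralg)
  : tmat Ralg (tidx n k) (tidx m k) :=
  fun I J => \prod_(a < k) M (I a) (J a).

(* Main.v *)
Require Import Defs.
From mathcomp Require Import all_boot all_algebra all_fingroup complex.
From mathcomp Require Import Rstruct.
Import GRing.Theory Num.Theory.
Local Open Scope ring_scope.
Set Implicit Arguments. Unset Strict Implicit. Unset Printing Implicit Defensive.
Lemma perm_adj_ind (k : nat) (P : {perm 'I_k} -> Prop) :
  P 1%g -> (forall s t, P s -> P t -> P (s * t)%g) ->
  (forall a b : 'I_k, val b = (val a).+1 -> P (tperm a b)) ->
  forall s, P s.
Proof.
move=> P1 PM Padj.
have Pfar : forall d (a c : 'I_k), val c = (val a + d.+1)%N -> P (tperm a c).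
  elim=> [|d IH] a c hc; first by apply: (Padj); rewrite hc addn1.
  have hlt : (val a + d.+1 < k)%N by apply: leq_trans (ltn_ord c); rewrite hc [(_ + d.+2)%N]addnS.
  pose c' := Ordinal hlt.
  have -> : tperm a c = (tperm c' c * tperm a c' * tperm c' c)%g.
    have := tpermJ a c' (tperm c' c).
    rewrite /conjg tpermV mulgA tpermL tpermD; first by move=> <-.
    - by rewrite -val_eqE /= eq_sym -{1}(addn0 a) eqn_add2l.
    - by rewrite -val_eqE /= hc eq_sym -{1}(addn0 a) eqn_add2l.
  apply: (PM); [apply: (PM)|]; try (apply: (Padj); rewrite /= hc addnS //).
  exact: (IH).
have Ptp : forall a c : 'I_k, a != c -> P (tperm a c).
  move=> a c; wlog lt_ac : a c / (val a < val c)%N.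
    move=> W ne; case: (ltngtP (val a) (val c)) => h.
    - exact: (W).
    - by rewrite tpermC; apply: (W); rewrite // eq_sym.
    - by move: ne; rewrite -val_eqE h eqxx.
  move=> _; apply: (Pfar (val c - val a).-1).
  by rewrite prednK ?subn_gt0 // subnKC // ltnW.
move=> s; case: (prod_tpermP s) => ts -> hts.
elim: ts hts => [|t ts IH] /=; first by rewrite big_nil.
case/andP=> ht hts; rewrite big_cons; apply: (PM); last exact: (IH).
exact: Ptp.
Qed.

Definition swp (n k : nat) (a b : 'I_k) (I : tidx n k) : tidx n k :=
  [ffun c => I (tperm a b c)].

Lemma swpK n k (a b : 'I_k) (I : tidx n k) : swp a b (swp a b I) = I.
Proof. by apply/ffunP => c; rewrite !ffunE tpermK. Qed.

Lemma eq_swp n k (a b : 'I_k) (I J : tidx n k) : (J == swp a b I) = (I == swp a b J).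
Proof.
apply/eqP/eqP => ->; by rewrite swpK.
Qed.

Lemma sum_delta_r (R : pzSemiRingType) (T : finType) (F : T -> R) x0 :
  \sum_x F x * (x == x0)%:R = F x0.
Proof.
rewrite (bigD1 x0) //= eqxx mulr1 big1 ?addr0 // => x /negbTE ->; by rewrite mulr0.
Qed.

Lemma sum_delta_l (R : pzSemiRingType) (T : finType) (F : T -> R) x0 :
  \sum_x (x == x0)%:R * F x = F x0.
Proof.
rewrite (bigD1 x0) //= eqxx mul1r big1 ?addr0 // => x /negbTE ->; by rewrite mul0r.
Qed.

Lemma Pq_E n (q : 'M[CC]_n) x y c d : Pq q x y c d = q y x * ((c == y) && (d == x))%:R.
Proof.
rewrite /Pq (bigD1 x) //= [X in _ + X]big1; last first.
  by move=> i; rewrite eq_sym => /negbTE ne; apply: big1 => j _; rewrite /Eunit ne /= mul0r mulr0.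
rewrite addr0 (bigD1 y) //= [X in _ + X]big1; last first.
  by move=> j; rewrite eq_sym => /negbTE ne; rewrite /Eunit ne /= !mulr0.
by rewrite addr0 /Eunit !eqxx /= -natrM mulnb.
Qed.

Lemma prod_ind (T : finType) (P : pred T) (E : pred T) :
  \prod_(c | P c) ((E c)%:R : CC) = ([forall c, P c ==> E c])%:R.
Proof.
case: forallP => [h|h].
  by apply: big1 => c Pc; move: (h c); rewrite Pc /= => ->.
have [c] : exists c, ~~ (P c ==> E c).
  by apply/existsP; rewrite -negb_forall; apply/forallP.
rewrite negb_imply => /andP [Pc /negbTE Ec].
by rewrite (bigD1 c) //= Ec mul0r.
Qed.

Lemma Pq_at_E n k (q : 'M[CC]_n) (a b : 'I_k) (ab : a != b) (I J : tidx n k) :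
  Pq_at q a b I J = q (I b) (I a) * (J == swp a b I)%:R.
Proof.
rewrite /Pq_at Pq_E prod_ind -mulrA -natrM mulnb; congr (_ * _%:R).
congr nat_of_bool; apply/idP/idP; last move=> /eqP ->.
  move=> H; apply/eqP; move: H; case/andP=> /andP [/eqP h1 /eqP h2] /forallP h3; apply/ffunP => c; rewrite ffunE.
  case: (eqVneq c a) => [->|ca]; first by rewrite tpermL.
  case: (eqVneq c b) => [->|cb]; first by rewrite tpermR.
  by rewrite tpermD 1?eq_sym //; move: (h3 c); rewrite ca cb /= => /eqP.
rewrite !ffunE tpermL tpermR !eqxx /=; apply/forallP => c.
by apply/implyP => /andP [ca cb]; rewrite ffunE tpermD 1?eq_sym.
Qed.

Lemma tmul_assoc (R : pzSemiRingType) (T1 T2 T3 T4 : finType)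
  (X : tmat R T1 T2) (Y : tmat R T2 T3) (Z : tmat R T3 T4) i l :
  tmul (tmul X Y) Z i l = tmul X (tmul Y Z) i l.
Proof.
rewrite /tmul; under eq_bigr do rewrite mulr_suml.
rewrite exchange_big; apply: eq_bigr => j _; rewrite mulr_sumr.
by apply: eq_bigr => m _; rewrite mulrA.
Qed.

Lemma tlift_mul (Ralg : algType CC) (T1 T2 T3 : finType)
  (X : tmat CC T1 T2) (Y : tmat CC T2 T3) i j :
  tlift Ralg (tmul X Y) i j = tmul (tlift Ralg X) (tlift Ralg Y) i j.
Proof.
rewrite /tlift /tmul scaler_suml; apply: eq_bigr => l _.
by rewrite mulr_algl scalerA.
Qed.

Section Entries.
Variables (Ralg : algType CC) (n k : nat) (q : 'M[CC]_n) (a b : 'I_k) (ab : a != b).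

Lemma mulPr (T : finType) (Y : tmat CC T (tidx n k)) I J :
  tmul Y (Pq_at q a b) I J = Y I (swp a b J) * q (J a) (J b).
Proof.
rewrite /tmul; under eq_bigr do rewrite Pq_at_E // eq_swp mulrCA mulrA.
by rewrite sum_delta_r !ffunE tpermL tpermR mulrC.
Qed.

Lemma mulPl (T : finType) (Y : tmat CC (tidx n k) T) I J :
  tmul (Pq_at q a b) Y I J = q (I b) (I a) * Y (swp a b I) J.
Proof.
rewrite /tmul; under eq_bigr do rewrite Pq_at_E // -mulrA.
by rewrite -mulr_sumr sum_delta_l.
Qed.

Lemma mulPr_lift (T : finType) (Y : tmat Ralg T (tidx n k)) I J :
  tmul Y (tlift Ralg (Pq_at q a b)) I J = q (J a) (J b) *: Y I (swp a b J).
Proof.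
rewrite /tmul /tlift; under eq_bigr do rewrite Pq_at_E // eq_swp -scalerA scaler_nat -scalerAr scalerAl.
by rewrite sum_delta_r !ffunE tpermL tpermR.
Qed.

Lemma mulPl_lift (T : finType) (Y : tmat Ralg (tidx n k) T) I J :
  tmul (tlift Ralg (Pq_at q a b)) Y I J = q (I b) (I a) *: Y (swp a b I) J.
Proof.
rewrite /tmul /tlift; under eq_bigr do rewrite Pq_at_E // -scalerA scaler_nat -scalerAl.
by rewrite -scaler_sumr sum_delta_l.
Qed.
End Entries.

Lemma perm4 (V : zmodType) (a b c d : V) : a + b + c + d = c + d + a + b.
Proof. by rewrite -addrA addrC !addrA. Qed.

Lemma perm4b (V : zmodType) (a b c d : V) : a + b + c + d = b + a + d + c.
Proof. by rewrite (addrC a b) -(addrA _ c d) (addrC c d) addrA. Qed.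

Section Manin.
Variables (Ralg : algType CC) (n m : nat) (q : 'M[CC]_n) (p : 'M[CC]_m) (M : 'I_n -> 'I_m -> Ralg).
Hypotheses (hq : parametric q) (hp : parametric p) (hM : manin q p M).

Definition Zf i j k l := M i k * M j l - (q j i * p k l) *: (M j l * M i k)
  + p k l *: (M i l * M j k) - q j i *: (M j k * M i l).

Lemma Zs1 i j k l : Zf i j k l = p k l *: Zf i j l k.
Proof.
case: hp => _ [pinv _].
rewrite /Zf !scalerDr !scalerN !scalerA mulrCA pinv !mulr1 scale1r.
by rewrite perm4 mulrC.
Qed.

Lemma Zs2 i j k l : Zf i j k l = - (q j i * p k l) *: Zf j i l k.
Proof.
case: hp => _ [pinv _]; case: hq => _ [qinv _].
rewrite /Zf !scalerDr !scalerN !scaleNr !opprK !scalerA.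
have e1 : q j i * p k l * (q i j * p l k) = 1.
  by rewrite mulrACA pinv qinv mulr1.
have e2 : q j i * p k l * p l k = q j i by rewrite -mulrA pinv mulr1.
have e3 : q j i * p k l * q i j = p k l by rewrite mulrAC qinv mul1r.
rewrite e1 e2 e3 scale1r.
exact: perm4b.
Qed.

Lemma Zij (i j : 'I_n) k l : (i < j)%N -> Zf i j k l = 0.
Proof.
case: hM => m1 m2 ij.
case: (ltngtP k l) => kl.
- exact: m2.
- by rewrite Zs1 /Zf m2 ?scaler0.
- have kl' : l = k by apply: val_inj.
  case: hp => _ [_ p1].
  rewrite /Zf kl' p1 mulr1 !scale1r m1 //.
  by rewrite subrr add0r subrr.
Qed.

Lemma Z0 (i j : 'I_n) (k l : 'I_m) : Zf i j k l = 0.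
Proof.
case: (ltngtP i j) => ij.
- exact: Zij.
- by rewrite Zs2 Zij ?scaler0.
- have -> : j = i by apply: val_inj.
  case: hq => _ [_ q1].
  rewrite /Zf q1 mul1r scale1r.
  by rewrite subrK subrr.
Qed.
End Manin.

Lemma insubd_ord k (a : 'I_k) (c : nat) : (c < k)%N -> val (insubd a c) = c.
Proof. by move=> h; rewrite val_insubd h. Qed.

Lemma prod_split (R : pzSemiRingType) k (F : 'I_k -> R) (a b : 'I_k) :
  val b = (val a).+1 ->
  \prod_(c < k) F c = (\prod_(0 <= c < a) F (insubd a c)) * (F a * F b)
                        * \prod_(a.+2 <= c < k) F (insubd a c).
Proof.
move=> hb.
rewrite (eq_bigr (fun c : 'I_k => F (insubd a (val c)))); last first.
  by move=> c _; have -> : insubd a (val c) = c by apply: val_inj; rewrite insubd_ord ?ltn_ord.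
rewrite -(big_mkord xpredT (fun c => F (insubd a c))).
have ak : (a <= k)%N by apply: ltnW.
have h1 : (a < k)%N by exact: ltn_ord. have h2 : (a.+1 < k)%N by rewrite -hb; exact: ltn_ord.
rewrite (big_cat_nat (n:=a)) //= (@big_ltn _ _ _ _ _ _ h1) (@big_ltn _ _ _ _ _ _ h2).
have -> : insubd a a = a by apply: val_inj; rewrite insubd_ord ?ltn_ord.
have -> : insubd a a.+1 = b by apply: val_inj; rewrite -hb insubd_ord ?ltn_ord.
by rewrite !mulrA.
Qed.

Lemma perm4c (V : zmodType) (a b c d : V) : a + b + c + d = a + d + b + c.
Proof. by rewrite -!addrA [d + _]addrC -!addrA. Qed.

Lemma swp_out n k (a b : 'I_k) (I : tidx n k) c : c != a -> c != b -> swp a b I c = I c.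
Proof. by move=> ca cb; rewrite ffunE tpermD // eq_sym. Qed.

Section F1.
Variables (Ralg : algType CC) (n m : nat) (q : 'M[CC]_n) (p : 'M[CC]_m) (M : 'I_n -> 'I_m -> Ralg).
Hypotheses (hq : parametric q) (hp : parametric p) (hM : manin q p M).
Variables (k : nat) (a b : 'I_k).
Hypothesis hb : val b = (val a).+1.

Let X := @Mprod Ralg n m k M.
Definition Lf (I : tidx n k) (J : tidx m k) := \prod_(0 <= c < a) M (I (insubd a c)) (J (insubd a c)).
Definition Rf (I : tidx n k) (J : tidx m k) := \prod_(a.+2 <= c < k) M (I (insubd a c)) (J (insubd a c)).

Lemma X_split I J : X I J = Lf I J * (M (I a) (J a) * M (I b) (J b)) * Rf I J.
Proof. exact: (prod_split (fun c => M (I c) (J c)) hb). Qed.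

Lemma LR_eq (I I' : tidx n k) (J J' : tidx m k) : (forall c, c != a -> c != b -> I' c = I c /\ J' c = J c) ->
  Lf I' J' = Lf I J /\ Rf I' J' = Rf I J.
Proof.
move=> h; split; apply: eq_big_nat => c /andP [c1 c2].
- have ck : (c < k)%N by apply: leq_trans c2 (ltnW (ltn_ord a)).
  have ca : insubd a c != a by rewrite -val_eqE /= insubd_ord // ltn_eqF.
  have cb : insubd a c != b by rewrite -val_eqE /= insubd_ord // hb ltn_eqF // ltnS ltnW.
  by have [-> ->] := h _ ca cb.
- have ck : (c < k)%N by [].
  have ca : insubd a c != a by rewrite -val_eqE /= insubd_ord // gtn_eqF // ltnW.
  have cb : insubd a c != b by rewrite -val_eqE /= insubd_ord // hb gtn_eqF.
  by have [-> ->] := h _ ca cb.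
Qed.

Lemma F1_rel I J :
  X I J + p (J a) (J b) *: X I (swp a b J) =
  q (I b) (I a) *: (X (swp a b I) J + p (J a) (J b) *: X (swp a b I) (swp a b J)).
Proof.
have ab : a != b by rewrite -val_eqE hb neq_ltn ltnSn.
have [L1 R1] := @LR_eq I (swp a b I) J J (fun c ca cb => conj (swp_out I ca cb) erefl).
have [L2 R2] := @LR_eq I I J (swp a b J) (fun c ca cb => conj erefl (swp_out J ca cb)).
have [L3 R3] := @LR_eq I (swp a b I) J (swp a b J) (fun c ca cb => conj (swp_out I ca cb) (swp_out J ca cb)).
rewrite !X_split L1 R1 L2 R2 L3 R3 !ffunE !tpermL !tpermR.
set L := Lf I J; set R := Rf I J.
have := Z0 hq hp hM (I a) (I b) (J a) (J b).
rewrite /Zf => hz.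
have : L * (M (I a) (J a) * M (I b) (J b) - (q (I b) (I a) * p (J a) (J b)) *: (M (I b) (J b) * M (I a) (J a)) +
    p (J a) (J b) *: (M (I a) (J b) * M (I b) (J a)) - q (I b) (I a) *: (M (I b) (J a) * M (I a) (J b))) * R = 0.
  by rewrite hz mulr0 mul0r.
rewrite !mulrDr !mulrDl !mulrN !mulNr -!scalerAr -!scalerAl => h.
apply/eqP; rewrite -subr_eq0 scalerDr scalerA opprD addrA perm4c; apply/eqP.
exact: h.
Qed.
End F1.

Lemma half_zero (V : lmodType CC) (v : V) : v = - v -> v = 0.
Proof.
move=> h.
have h2 : (2%:R : CC) *: v = 0 by rewrite scaler_nat mulr2n {1}h addNr.
have n2 : (2%:R : CC) != 0 by rewrite pnatr_eq0.
by rewrite -[v]scale1r -(mulVf n2) -scalerA h2 scaler0.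
Qed.

Section Avg.
Variables (Ralg : algType CC) (k : nat).

Lemma avg_r (T T' : finType) (Y : tmat Ralg T T') (c : CC) (f : {perm 'I_k} -> CC)
  (rho : {perm 'I_k} -> tmat CC T' T') I J :
  tmul Y (tlift Ralg (fun L J => c * \sum_s f s * rho s L J)) I J
  = c *: \sum_s f s *: tmul Y (tlift Ralg (rho s)) I J.
Proof.
rewrite /tmul /tlift.
under eq_bigr do rewrite -scalerA scaler_suml -scalerAr mulr_sumr.
rewrite -scaler_sumr exchange_big /=; congr (_ *: _); apply: eq_bigr => s _.
by rewrite scaler_sumr; apply: eq_bigr => L _; rewrite scalerAr scalerA.
Qed.

Lemma avg_l (T T' : finType) (Y : tmat Ralg T T') (c : CC) (f : {perm 'I_k} -> CC)
  (rho : {perm 'I_k} -> tmat CC T T) I J :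
  tmul (tlift Ralg (fun I L => c * \sum_s f s * rho s I L)) Y I J
  = c *: \sum_s f s *: tmul (tlift Ralg (rho s)) Y I J.
Proof.
rewrite /tmul /tlift.
under eq_bigr do rewrite -scalerA scaler_suml -scalerAl mulr_suml.
rewrite -scaler_sumr exchange_big /=; congr (_ *: _); apply: eq_bigr => s _.
by rewrite scaler_sumr; apply: eq_bigr => L _; rewrite scalerAl scalerA.
Qed.

Lemma avg_const (V : lmodType CC) (v : V) : (k`!%:R : CC)^-1 *: \sum_(s : {perm 'I_k}) v = v.
Proof.
rewrite sumr_const card_Sn -[v *+ _](@scaler_nat CC) scalerA mulVf ?scale1r //.
by rewrite pnatr_eq0 -lt0n fact_gt0.
Qed.
End Avg.

Section Act.
Variables (n k : nat) (q : 'M[CC]_n) (rho : {perm 'I_k} -> tmat CC (tidx n k) (tidx n k)).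
Hypothesis hrho : is_Pq_action q rho.

Lemma Anti_rho t I L :
  tmul (Antisymm rho) (rho t) I L = (-1) ^+ (odd_perm t) * Antisymm rho I L.
Proof.
case: hrho => _ [hM _].
rewrite /tmul /Antisymm.
under eq_bigr do rewrite -mulrA mulr_suml.
rewrite -mulr_sumr exchange_big /= mulrCA; congr (_ * _).
rewrite [in RHS](reindex_inj (mulIg t)) mulr_sumr; apply: eq_bigr => s _.
rewrite hM /tmul !mulr_sumr; apply: eq_bigr => K _.
have e : (-1) ^+ odd_perm t * ((-1) ^+ odd_perm s * (-1) ^+ odd_perm t) = (-1) ^+ odd_perm s :> CC.
  by rewrite mulrCA -expr2 sqrr_sign mulr1.
by rewrite odd_permM signr_addb mulrA e mulrA.
Qed.

Lemma Sym_rho t I L : tmul (rho t) (Symm rho) I L = Symm rho I L.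
Proof.
case: hrho => _ [hM _].
rewrite /tmul /Symm.
under eq_bigr do rewrite mulrCA mulr_sumr.
rewrite -mulr_sumr exchange_big /=; congr (_ * _).
rewrite [in RHS](reindex_inj (mulgI t)); apply: eq_bigr => s _.
by rewrite hM.
Qed.
End Act.

Section Part1.
Variables (Ralg : algType CC) (n m : nat) (q : 'M[CC]_n) (p : 'M[CC]_m) (M : 'I_n -> 'I_m -> Ralg).
Hypotheses (hq : parametric q) (hp : parametric p) (hM : manin q p M).
Variables (k : nat) (rhoq : {perm 'I_k} -> tmat CC (tidx n k) (tidx n k))
         (rhop : {perm 'I_k} -> tmat CC (tidx m k) (tidx m k)).
Hypotheses (hrq : is_Pq_action q rhoq) (hrp : is_Pq_action p rhop).

Let X := @Mprod Ralg n m k M.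
Let G := tmul (tlift Ralg (Antisymm rhoq)) X.

Lemma G_adj (a b : 'I_k) (hb : val b = (val a).+1) I J :
  G I J + p (J a) (J b) *: G I (swp a b J) = 0.
Proof.
have ab : a != b by rewrite -val_eqE hb neq_ltn ltnSn.
set W := fun K => X K J + p (J a) (J b) *: X K (swp a b J).
have eS : G I J + p (J a) (J b) *: G I (swp a b J) = \sum_K (Antisymm rhoq I K)%:A * W K.
  rewrite /G /tmul scaler_sumr -big_split; apply: eq_bigr => K _.
  by rewrite /W mulrDr scalerAr.
rewrite eS; apply: half_zero.
have hW : forall K, W K = q (K b) (K a) *: W (swp a b K).
  by move=> K; exact: (F1_rel hq hp hM hb K J).
rewrite [LHS](eq_bigr _ (fun K _ => congr1 (fun w => (Antisymm rhoq I K)%:A * w) (hW K))).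
rewrite [LHS](reindex_inj (can_inj (swpK a b))) /=.
have hA : forall K, Antisymm rhoq I (swp a b K) * q (K a) (K b) = - Antisymm rhoq I K.
  move=> K; have := Anti_rho hrq (tperm a b) I K.
  rewrite odd_tperm ab expr1 mulN1r => <-.
  rewrite -mulPr //; apply: eq_bigr => L _.
  by case: hrq => _ [_ hadj]; rewrite hadj.
rewrite -sumrN; apply: eq_bigr => K _.
rewrite swpK !ffunE tpermL tpermR.
by rewrite -scalerAr scalerAl scalerA mulrC hA scaleNr mulNr.
Qed.

Lemma G_perm s I J : tmul G (tlift Ralg (rhop s)) I J = (-1) ^+ odd_perm s *: G I J.
Proof.
move: s I J; apply: perm_adj_ind.
- move=> I J; case: hrp => h1 _.
  rewrite /tmul /tlift; under eq_bigr do rewrite h1 scaler_nat.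
  by rewrite odd_perm1 expr0 scale1r sum_delta_r.
- move=> s t Ps Pt I J; case: hrp => _ [hm _].
  have e1 : tmul G (tlift Ralg (rhop (s * t)%g)) I J
          = tmul G (tmul (tlift Ralg (rhop s)) (tlift Ralg (rhop t))) I J.
    by apply: eq_bigr => L _; rewrite -tlift_mul /tlift hm.
  rewrite e1 -tmul_assoc.
  have e3 : tmul (tmul G (tlift Ralg (rhop s))) (tlift Ralg (rhop t)) I J
          = tmul (fun I L => (-1) ^+ odd_perm s *: G I L) (tlift Ralg (rhop t)) I J.
    by apply: eq_bigr => L _; rewrite Ps.
  rewrite e3 /tmul; under eq_bigr do rewrite -scalerAl.
  rewrite -scaler_sumr -/(tmul G (tlift Ralg (rhop t)) I J) Pt scalerA.
  by rewrite odd_permM signr_addb.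
- move=> a b hb I J.
  have ab : a != b by rewrite -val_eqE hb neq_ltn ltnSn.
  have e : tmul G (tlift Ralg (rhop (tperm a b))) I J = tmul G (tlift Ralg (Pq_at p a b)) I J.
    by apply: eq_bigr => L _; case: hrp => _ [_ hadj]; rewrite /tlift hadj.
  rewrite e mulPr_lift // odd_tperm ab expr1 scaleN1r.
  by apply/eqP; rewrite -addr_eq0 addrC; apply/eqP; exact: G_adj.
Qed.

Lemma part1 I J : G I J = tmul G (tlift Ralg (Antisymm rhop)) I J.
Proof.
rewrite /Antisymm (avg_r _ _ (fun s => (-1) ^+ odd_perm s)).
under eq_bigr do rewrite G_perm scalerA -expr2 sqrr_sign scale1r.
by rewrite avg_const.
Qed.
End Part1.

Section Part2.
Variables (Ralg : algType CC) (n m : nat) (q : 'M[CC]_n) (p : 'M[CC]_m) (M : 'I_n -> 'I_m -> Ralg).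
Hypotheses (hq : parametric q) (hp : parametric p) (hM : manin q p M).
Variables (k : nat) (rhoq : {perm 'I_k} -> tmat CC (tidx n k) (tidx n k))
         (rhop : {perm 'I_k} -> tmat CC (tidx m k) (tidx m k)).
Hypotheses (hrq : is_Pq_action q rhoq) (hrp : is_Pq_action p rhop).

Let X := @Mprod Ralg n m k M.
Let H := tmul X (tlift Ralg (Symm rhop)).

Lemma Sp_sw (a b : 'I_k) (hb : val b = (val a).+1) L J :
  Symm rhop L J = p (L b) (L a) * Symm rhop (swp a b L) J.
Proof.
have ab : a != b by rewrite -val_eqE hb neq_ltn ltnSn.
transitivity (tmul (Pq_at p a b) (Symm rhop) L J); last by rewrite mulPl.
rewrite -(Sym_rho hrp (tperm a b)); apply: eq_bigr => K _.
by case: hrp => _ [_ hadj]; rewrite hadj.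
Qed.

Lemma H_adj (a b : 'I_k) (hb : val b = (val a).+1) I J :
  H I J = q (I b) (I a) *: H (swp a b I) J.
Proof.
set T := fun I => \sum_L (X I L + p (L a) (L b) *: X I (swp a b L)) * (Symm rhop L J)%:A.
have hT : forall I, T I = H I J + H I J.
  move=> I0; rewrite /T /H /tmul /tlift.
  under eq_bigr do rewrite mulrDl.
  rewrite big_split /=; congr (_ + _).
  rewrite (reindex_inj (can_inj (swpK a b))) /=; apply: eq_bigr => L _.
  rewrite swpK !ffunE tpermL tpermR.
  by rewrite [in RHS](Sp_sw hb L J) -scalerA -[in RHS]scalerAr [in RHS]scalerAl.
have e : T I = q (I b) (I a) *: T (swp a b I).
  rewrite /T scaler_sumr; apply: eq_bigr => L _.
  by rewrite (F1_rel hq hp hM hb I L) scalerAl.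
move: e; rewrite !hT => e.
apply/eqP; rewrite -subr_eq0; apply/eqP; apply: half_zero.
apply/eqP; rewrite -addr_eq0; apply/eqP.
by rewrite addrACA -opprD e scalerDr subrr.
Qed.

Lemma H_perm s I J : tmul (tlift Ralg (rhoq s)) H I J = H I J.
Proof.
move: s I J; apply: perm_adj_ind.
- move=> I J; case: hrq => h1 _.
  rewrite /tmul /tlift; under eq_bigr do rewrite h1 scaler_nat eq_sym.
  by rewrite sum_delta_l.
- move=> s t Ps Pt I J; case: hrq => _ [hm _].
  have e1 : tmul (tlift Ralg (rhoq (s * t)%g)) H I J
          = tmul (tmul (tlift Ralg (rhoq s)) (tlift Ralg (rhoq t))) H I J.
    by apply: eq_bigr => L _; rewrite -tlift_mul /tlift hm.
  rewrite e1 tmul_assoc -[RHS](Ps I J); apply: eq_bigr => L _.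
  by rewrite Pt.
- move=> a b hb I J.
  have ab : a != b by rewrite -val_eqE hb neq_ltn ltnSn.
  have e : tmul (tlift Ralg (rhoq (tperm a b))) H I J = tmul (tlift Ralg (Pq_at q a b)) H I J.
    by apply: eq_bigr => L _; case: hrq => _ [_ hadj]; rewrite /tlift hadj.
  by rewrite e mulPl_lift // -H_adj.
Qed.

Lemma part2 I J : H I J = tmul (tlift Ralg (Symm rhoq)) H I J.
Proof.
have eS : tmul (tlift Ralg (Symm rhoq)) H I J
   = tmul (tlift Ralg (fun I K => (k`!%:R)^-1 * \sum_s 1 * rhoq s I K)) H I J.
  apply: eq_bigr => K _; rewrite /tlift /Symm.
  have -> : \sum_s 1 * rhoq s I K = \sum_s rhoq s I K by apply: eq_bigr => s _; rewrite mul1r.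
  by [].
rewrite eS (avg_l _ _ (fun _ => 1)).
under eq_bigr do rewrite H_perm scale1r.
by rewrite avg_const.
Qed.
End Part2.

Theorem mainTheorem7 (Ralg : algType CC) (n m : nat)
  (q : 'M[CC]_n) (p : 'M[CC]_m) (M : 'I_n -> 'I_m -> Ralg) :
  parametric q -> parametric p -> manin q p M ->
  forall (k : nat), (1 <= k)%N ->
  forall (rhoq : {perm 'I_k} -> tmat CC (tidx n k) (tidx n k))
         (rhop : {perm 'I_k} -> tmat CC (tidx m k) (tidx m k)),
  is_Pq_action q rhoq -> is_Pq_action p rhop ->
  (forall I J,
     tmul (tlift Ralg (Antisymm rhoq)) (@Mprod Ralg n m k M) I J =
     tmul (tmul (tlift Ralg (Antisymm rhoq)) (@Mprod Ralg n m k M)) (tlift Ralg (Antisymm rhop)) I J) /\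
  (forall I J,
     tmul (@Mprod Ralg n m k M) (tlift Ralg (Symm rhop)) I J =
     tmul (tmul (tlift Ralg (Symm rhoq)) (@Mprod Ralg n m k M)) (tlift Ralg (Symm rhop)) I J).
Proof.
move=> hq hp hM k _ rhoq rhop hrq hrp; split => I J.
- exact: (part1 hq hp hM hrq hrp).
- rewrite tmul_assoc; exact: (part2 hq hp hM hrq hrp).
Qed.
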